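(* Let $k\ge3$ and let $\sigma=\sigma_1\varepsilon_1\sigma_2\cdots\varepsilon_{k-1}\sigma_k$ be a generalized pattern of length $k$ such that for some $i$ both $\varepsilon_i$ and $\varepsilon_{i+1}$ are empty (i.e., $\sigma$ has three consecutive elements $\sigma_i\sigma_{i+1}\sigma_{i+2}$ with no dash between them). Then there exist constants $0<c,d<1$ such that $c^n n!<\alpha_n(\sigma)<d^n n!$ for all $n\ge k$.
   Context: $\mathfrak S_n$ is the symmetric group on $\{1,\dots,n\}$, permutations written in one-line notation. A generalized pattern of length $m$ is a permutation $\sigma_1\cdots\sigma_m\in\mathfrak S_m$ together with, for each $j=1,\dots,m-1$, a symbol $\varepsilon_j$ which is either a dash ''-'' or empty; write it $\sigma_1\varepsilon_1\sigma_2\cdots\varepsilon_{m-1}\sigma_m$. A permutation $\pi\in\mathfrak S_n$ contains this pattern if there are indices $i_1<\dots<i_m$ such that (i) whenever $\varepsilon_j$ is empty, $i_{j+1}=i_j+1$, and (ii) for all $a,b$, $\pi_{i_a}<\pi_{i_b}$ iff $\sigma_a<\sigma_b$; otherwise $\pi$ avoids it. $\alpha_n(\sigma)$ is the number of permutations in $\mathfrak S_n$ avoiding $\sigma$. *)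

(* Defs.v *)
From HB Require Import structures.
From mathcomp Require Import all_boot all_order all_algebra all_fingroup.
From mathcomp Require Import reals.
Set Implicit Arguments. Unset Strict Implicit. Unset Printing Implicit Defensive.

(* A generalized pattern of length k is a pair (sigma, eps) with
   sigma : 'S_k (one-line notation sigma_1 ... sigma_k, 0-based values)
   eps : nat -> bool, where eps j = true means that the symbol between
   positions j and j+1 (0-based, j < k-1) is EMPTY (no dash), and
   eps j = false means it is a dash. Values eps j for j >= k-1 are irrelevant. *)

Definition gp_contains (n k : nat) (pi : 'S_n) (sigma : 'S_k) (eps : nat -> bool)
  : bool :=
  [exists f : {ffun 'I_k -> 'I_n},
     [forall a : 'I_k, forall b : 'I_k,
        [&& ((val a < val b) ==> (val (f a) < val (f b))),
            ((val b == (val a).+1) && eps (val a)) ==> (val (f b) == (val (f a)).+1)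
          & ((val (pi (f a)) < val (pi (f b))) == (val (sigma a) < val (sigma b)))]]].

Definition alpha (n k : nat) (sigma : 'S_k) (eps : nat -> bool) : nat :=
  #|[set pi : 'S_n | ~~ gp_contains pi sigma eps]|.

(* Main.v *)
Require Import Defs.
From mathcomp Require Import all_boot all_order all_algebra all_fingroup.
From mathcomp Require Import reals.
From mathcomp Require Import zify ring lra.
Import GRing.Theory Num.Theory.
Import Order.TTheory.
Set Implicit Arguments. Unset Strict Implicit. Unset Printing Implicit Defensive.

Section Core.
Variable n : nat.
Implicit Types (B : {set 'I_n}) (kap : 'I_n -> nat) (p g : 'S_n).

Definition mtch B kap p : bool :=
  [forall x in B, forall y in B, (val (p x) < val (p y)) == (kap x < kap y)].

Definition rk B kap x := #|[set y in B | kap y < kap x]|.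

Lemma rk_lt B kap x y : x \in B -> kap x < kap y -> rk B kap x < rk B kap y.
Proof.
move=> xB lt; rewrite /rk; apply: proper_card; apply/properP; split.
  apply/subsetP=> z; rewrite !inE => /andP[-> /ltn_trans]; exact.
by exists x; rewrite !inE xB ?lt // ltnn.
Qed.

Lemma rk_bound B kap x : x \in B -> rk B kap x < #|B|.
Proof.
move=> xB; rewrite /rk; apply: proper_card; apply/properP; split.
  by apply/subsetP=> z; rewrite !inE => /andP[].
by exists x; rewrite // !inE ltnn andbF.
Qed.

Lemma rk_mono B kap : {in B &, injective kap} ->
  {in B &, forall x y, (rk B kap x < rk B kap y) = (kap x < kap y)}.
Proof.
move=> ik x y xB yB; case: (ltngtP (kap x) (kap y)) => h.
- by rewrite rk_lt.
- by apply/negbTE; rewrite -leqNgt ltnW // rk_lt.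
- by rewrite (ik x y xB yB h) ltnn.
Qed.

Lemma rk_inj B kap : {in B &, injective kap} -> {in B &, injective (rk B kap)}.
Proof.
move=> ik x y xB yB e; apply: ik => //; case: (ltngtP (kap x) (kap y)) => // h.
- by move: (rk_lt xB h); rewrite e ltnn.
- by move: (rk_lt yB h); rewrite e ltnn.
Qed.

Lemma rk_surj B kap i : {in B &, injective kap} -> i < #|B| ->
  exists2 y, y \in B & rk B kap y = i.
Proof.
move=> ik iB.
have U : uniq (map (rk B kap) (enum B)).
  rewrite map_inj_in_uniq ?enum_uniq // => x y; rewrite !mem_enum; exact: rk_inj.
have S : {subset map (rk B kap) (enum B) <= iota 0 #|B|}.
  by move=> z /mapP[y]; rewrite mem_enum mem_iota => yB ->; rewrite rk_bound.
have sz : size (iota 0 #|B|) <= size (map (rk B kap) (enum B)).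
  by rewrite size_iota size_map -cardE.
have [_ E] := uniq_min_size U S sz.
have : i \in iota 0 #|B| by rewrite mem_iota.
rewrite -E; case/mapP=> y; rewrite mem_enum => yB ->; by exists y.
Qed.

Definition g0 B kap p x :=
  if x \in B then odflt x [pick y in B | rk B (fun z => val (p z)) y == rk B kap x]
  else x.

Lemma pinj p : injective (fun z => val (p z)).
Proof. by move=> x y /val_inj /perm_inj. Qed.

Lemma g0P B kap p x : {in B &, injective kap} -> x \in B ->
  g0 B kap p x \in B /\ rk B (fun z => val (p z)) (g0 B kap p x) = rk B kap x.
Proof.
move=> ik xB; rewrite /g0 xB; case: pickP => [y /andP[yB /eqP] //| none].
have [y yB e] := rk_surj (fun x y _ _ => @pinj p x y) (rk_bound kap xB).
by move: (none y); rewrite yB e eqxx.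
Qed.

Lemma g0_inj B kap p : {in B &, injective kap} -> injective (g0 B kap p).
Proof.
move=> ik x y.
case xB: (x \in B); case yB: (y \in B).
- move=> e; have [_ ex] := @g0P B kap p _ ik xB; have [_ ey] := @g0P B kap p _ ik yB.
  by apply: (rk_inj ik xB yB); rewrite -ex -ey e.
- have [h _] := @g0P B kap p _ ik xB; move=> e; move: h; rewrite e /g0 yB.
  by rewrite yB.
- have [h _] := @g0P B kap p _ ik yB; move=> e; move: h; rewrite -e /g0 xB.
  by rewrite xB.
- by rewrite /g0 xB yB.
Qed.

Lemma exists_match B kap p : {in B &, injective kap} ->
  exists2 g, perm_on B g & mtch B kap ((g * p)%g).
Proof.
move=> ik; exists (perm (@g0_inj B kap p ik)).
  apply/subsetP=> x; rewrite inE permE /g0; case: (x \in B) => //.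
  by rewrite eqxx.
apply/forallP=> x; apply/implyP=> xB; apply/forallP=> y; apply/implyP=> yB.
rewrite !permM !permE.
have [gx ex] := @g0P B kap p _ ik xB; have [gy ey] := @g0P B kap p _ ik yB.
by rewrite -(@rk_mono B (fun z => val (p z)) (fun x y _ _ => @pinj p x y)) // ex ey rk_mono.
Qed.

Lemma match_rk B kap p g : {in B &, injective kap} -> perm_on B g ->
  mtch B kap ((g * p)%g) -> {in B, forall x, rk B (fun z => val (p z)) (g x) = rk B kap x}.
Proof.
move=> ik pg /forallP m x xB.
have -> : rk B kap x = #|[set y in B | val (p (g y)) < val (p (g x))]|.
  apply: eq_card => y; rewrite !inE; case yB: (y \in B) => //=.
  by move: (m y); rewrite yB /= => /forallP /(_ x); rewrite xB !permM /= => /eqP ->.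
rewrite /rk -[in RHS](card_imset _ (@perm_inj _ g)); apply: eq_card => z.
rewrite inE; apply/andP/imsetP.
- case=> zB lt; exists ((g^-1)%g z); last by rewrite permKV.
  rewrite inE (perm_closed _ (perm_onV pg)) zB /=; rewrite permKV; exact: lt.
- by case=> y; rewrite inE => /andP[yB lt] ->; rewrite perm_closed.
Qed.

Lemma match_uniq B kap p g1 g2 : {in B &, injective kap} ->
  perm_on B g1 -> perm_on B g2 ->
  mtch B kap ((g1 * p)%g) -> mtch B kap ((g2 * p)%g) -> g1 = g2.
Proof.
move=> ik p1 p2 m1 m2; apply/permP=> x.
case xB: (x \in B); last by rewrite (out_perm p1) ?xB // (out_perm p2) ?xB.
apply: (@rk_inj B (fun z => val (p z)) (fun x y _ _ => @pinj p x y)); rewrite ?perm_closed //.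
by rewrite (match_rk ik p1 m1) // (match_rk ik p2 m2).
Qed.

Lemma count_match B kap (P : pred 'S_n) : {in B &, injective kap} ->
  (forall g p, perm_on B g -> P p -> P ((g * p)%g)) ->
  #|[set p | P p]| = #|[set p | P p && mtch B kap p]| * #|B|`!.
Proof.
move=> ik inv.
set M := [set p | P p && mtch B kap p].
set H := [set g : 'S_n | perm_on B g].
have cH : #|H| = #|B|`! by rewrite -card_perm; apply: eq_card => g; rewrite inE.
rewrite -cH -cardsX.
pose Phi (q : 'S_n * 'S_n) := (q.2 * q.1)%g.
have inj : {in setX M H &, injective Phi}.
  case=> r1 h1 [r2 h2]; rewrite !inE /= /Phi => /andP[/andP[_ m1] ph1] /andP[/andP[_ m2] ph2] e.
  have e1 : r1 = ((h1^-1) * (h1 * r1))%g by rewrite mulKg.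
  have e2 : r2 = ((h2^-1) * (h1 * r1))%g by rewrite e mulKg.
  have hh : (h1^-1)%g = (h2^-1)%g.
    apply: (@match_uniq B kap (h1 * r1)%g _ _ ik (perm_onV ph1) (perm_onV ph2)); [rewrite -e1 | rewrite -e2] => //.
  have h12 : h1 = h2 by rewrite -(invgK h1) hh invgK.
  by rewrite e1 e2 h12.
rewrite -(card_in_imset inj); apply: eq_card => r; rewrite [in LHS]inE.
apply/idP/imsetP.
- move=> Pr; have [g pg mg] := exists_match r ik.
  exists ((g * r)%g, (g^-1)%g); last by rewrite /Phi /= mulKg.
  by rewrite !inE mg perm_onV // andbT inv.
- case=> [[r1 h1]]; rewrite !inE /= => /andP[/andP[Pr1 _] ph1] ->.
  exact: inv.
Qed.

Lemma mtch_disj B B' kap g p : [disjoint B & B'] -> perm_on B' g ->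
  mtch B kap ((g * p)%g) = mtch B kap p.
Proof.
move=> dis pg; have fx : {in B, forall x, g x = x}.
  move=> x xB; apply: (out_perm pg); by rewrite (disjointFr dis xB).
apply: eq_forallb => x; case xB: (x \in B) => //=.
apply: eq_forallb => y; case yB: (y \in B) => //=.
by rewrite !permM !fx.
Qed.

End Core.

Section Upper.
Variables (n k : nat) (sigma : 'S_k) (eps : nat -> bool).

Definition block t : {set 'I_n} := [set x : 'I_n | (t * k <= x) && (x < t * k + k)].
Definition kapU t (x : 'I_n) : nat :=
  if (insub (val x - t * k) : option 'I_k) is Some a then val (sigma a) else 0.

Lemma kapU_inj t : {in block t &, injective (kapU t)}.
Proof.
move=> x y; rewrite !inE => /andP[lx ux] /andP[ly uy].
have hx : x - t * k < k by lia.
have hy : y - t * k < k by lia.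
rewrite /kapU; case: insubP => [a _ ea|/negP //]; case: insubP => [b _ eb|/negP //].
move=> /val_inj /perm_inj e; apply: val_inj => /=; move: ea eb; rewrite e => ea eb.
have : val b = x - t * k by []. have : val b = y - t * k by [].
rewrite /=; lia.
Qed.

Lemma bo_proof t (Ht : t * k + k <= n) (a : 'I_k) : t * k + a < n.
Proof. have := ltn_ord a; lia. Qed.

Definition bo t Ht a : 'I_n := Ordinal (@bo_proof t Ht a).

Lemma card_block t : t * k + k <= n -> #|block t| = k.
Proof.
move=> Ht; rewrite -[RHS](card_ord k) -(card_imset _ (_ : injective (bo Ht))).
  apply: eq_card => x; rewrite inE; apply/idP/imsetP.
    move=> /andP[l u]; have h : x - t * k < k by lia.
    exists (Ordinal h); [by [] | apply: val_inj => /=; lia].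
  by case=> a _ ->; rewrite /= leq_addr ltn_add2l ltn_ord.
by move=> a b /(congr1 val) /= /addnI e; apply: val_inj.
Qed.

Lemma contains_of_mtch t p (Ht : t * k + k <= n) :
  mtch (block t) (kapU t) p -> gp_contains p sigma eps.
Proof.
move=> /forallP m; apply/existsP; exists [ffun a => bo Ht a].
apply/forallP=> a; apply/forallP=> b; rewrite !ffunE /=.
have kb : forall c : 'I_k, kapU t (bo Ht c) = val (sigma c).
  by move=> c; rewrite /kapU /= addKn valK.
have ib : forall c : 'I_k, bo Ht c \in block t.
  by move=> c; rewrite inE /= leq_addr ltn_add2l ltn_ord.
move: (m (bo Ht a)); rewrite ib /= => /forallP /(_ (bo Ht b)); rewrite ib /= !kb => ->.
rewrite andbT; apply/andP; split; apply/implyP.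
  by rewrite ltn_add2l.
by case/andP=> /eqP -> _; rewrite addnS.
Qed.

Fixpoint Aset j (p : 'S_n) : bool :=
  if j is j'.+1 then Aset j' p && ~~ mtch (block j') (kapU j') p else true.

Lemma block_disj t j : t < j -> [disjoint block t & block j].
Proof.
move=> tj; have : t.+1 * k <= j * k by rewrite leq_mul2r tj orbT.
rewrite mulSn => h; rewrite -setI_eq0; apply/eqP/setP => x; rewrite !inE; apply/negbTE/negP; lia.
Qed.

Lemma Aset_inv j t g p : j <= t -> perm_on (block t) g -> Aset j (g * p)%g = Aset j p.
Proof.
move=> jt pg; elim: j jt => [//|j IH] jt /=.
by rewrite IH ?(ltnW jt) // (mtch_disj _ _ (block_disj jt) pg).
Qed.

Lemma avoid_Aset j p : j * k <= n -> ~~ gp_contains p sigma eps -> Aset j p.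
Proof.
elim: j => [//|j IH] h av /=.
have Ht : j * k + k <= n by rewrite addnC -mulSn.
rewrite IH ?(leq_trans _ Ht) ?leq_addr //=.
by apply/negP => /(contains_of_mtch Ht); apply/negP.
Qed.

Lemma count_Aset j : j * k <= n ->
  #|[set p | Aset j p]| * k`! ^ j = (k`! - 1) ^ j * n`!.
Proof.
elim: j => [|j IH] h.
  have -> : [set p | Aset 0 p] = setT by apply/setP=> p; rewrite !inE.
  by rewrite cardsT card_Sn expn0 muln1 mul1n.
have Ht : j * k + k <= n by rewrite addnC -mulSn.
have IH' := IH (leq_trans (leq_addr _ _) Ht).
have cm := @count_match n (block j) (kapU j) (Aset j) (@kapU_inj j)
   (fun g p pg Pp => etrans (Aset_inv p (leqnn j) pg) Pp).
rewrite card_block // in cm.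
have sp := cardsID [set p | mtch (block j) (kapU j) p] [set p | Aset j p].
have e1 : [set p | Aset j p] :&: [set p | mtch (block j) (kapU j) p] =
          [set p | Aset j p && mtch (block j) (kapU j) p].
  by apply/setP=> p; rewrite !inE.
have e2 : [set p | Aset j p] :\: [set p | mtch (block j) (kapU j) p] =
          [set p | Aset j.+1 p].
  by apply/setP=> p; rewrite !inE /= andbC.
rewrite e1 e2 in sp.
set a := #|[set p | Aset j p]| in IH' cm sp.
set b := #|[set p | Aset j p && _]| in cm sp.
set c := #|[set p | Aset j.+1 p]| in sp *.
set K := k`! in IH' cm *.
have K1 : 0 < K by rewrite fact_gt0.
have cK : c * K = a * (K - 1).
  rewrite mulnBr muln1; apply/eqP; rewrite -(eqn_add2r (b * K)) -mulnDl addnC sp.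
  by rewrite -cm subnK // leq_pmulr.
rewrite !expnS mulnA cK mulnAC IH' -[RHS]mulnA [LHS]mulnC //.
Qed.

End Upper.

Definition lv (bb : bool) (r : nat) : nat := if bb then (3 - r) %% 3 else r.

Lemma lv_window bb x :
  (lv bb (x %% 3) < lv bb (x.+1 %% 3)) + (lv bb (x.+1 %% 3) < lv bb (x.+2 %% 3))
  + (lv bb (x.+2 %% 3) < lv bb (x %% 3)) = if bb then 1 else 2.
Proof.
rewrite -(addn2 x) -(addn1 x) -(modnDml x 1) -(modnDml x 2).
have : x %% 3 < 3 by rewrite ltn_mod.
by case: (x %% 3) => [|[|[|]]] //; case: bb.
Qed.

Lemma mod3_neq x : [/\ x %% 3 != x.+1 %% 3, x.+1 %% 3 != x.+2 %% 3 & x.+2 %% 3 != x %% 3].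
Proof.
rewrite -(addn2 x) -(addn1 x) -(modnDml x 1) -(modnDml x 2).
have : x %% 3 < 3 by rewrite ltn_mod.
by case: (x %% 3) => [|[|[|]]].
Qed.

Lemma lv_inj bb r s : r < 3 -> s < 3 -> r != s -> lv bb r != lv bb s.
Proof. by case: r => [|[|[|]]] //; case: s => [|[|[|]]] //; case: bb. Qed.

Section Lower.
Variables (n k : nat) (sigma : 'S_k) (eps : nat -> bool).

Definition Fp bb (p : 'S_n) : bool :=
  [forall x : 'I_n, forall y : 'I_n, (x %% 3 != y %% 3) ==>
     ((val (p x) < val (p y)) == (lv bb (x %% 3) < lv bb (y %% 3)))].

Lemma Fp_avoid bb p i (hi : i.+2 < k) : eps i -> eps i.+1 ->
  bb = ((val (sigma (Ordinal (ltnW (ltnW hi)))) < val (sigma (Ordinal (ltnW hi))))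
        + (val (sigma (Ordinal (ltnW hi))) < val (sigma (Ordinal hi)))
        + (val (sigma (Ordinal hi)) < val (sigma (Ordinal (ltnW (ltnW hi))))) == 2) ->
  Fp bb p -> ~~ gp_contains p sigma eps.
Proof.
move=> e0 e1 ebb /forallP F; apply/negP => /existsP [f /forallP H].
set a := Ordinal (ltnW (ltnW hi)); set b := Ordinal (ltnW hi); set c := Ordinal hi.
have G : forall u v : 'I_k, _ := fun u v => (forallP (H u)) v.
have [_ fab _] := and3P (G a b).
have [_ fbc _] := and3P (G b c).
have [_ _ oab] := and3P (G a b).
have [_ _ obc] := and3P (G b c).
have [_ _ oca] := and3P (G c a).
move: fab; rewrite /= eqxx e0 /= => /eqP fab.
move: fbc; rewrite /= eqxx e1 /= => /eqP fbc.
move: (F (f a)) (F (f b)) (F (f c)) => /forallP Fab /forallP Fbc /forallP Fca.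
move: (Fab (f b)) (Fbc (f c)) (Fca (f a)) oab obc oca => /=.
rewrite fbc fab.
have [-> -> ->] := mod3_neq (f a) => /= /eqP -> /eqP -> /eqP ->.
move=> E1 E2 E3; move: ebb => /=.
rewrite -(eqP E1) -(eqP E2) -(eqP E3) lv_window.
by case: bb {F Fab Fbc Fca E1 E2 E3}.
Qed.

Definition Br r : {set 'I_n} := [set x : 'I_n | x %% 3 == r].

Lemma perm_on_mod r g (x : 'I_n) : perm_on (Br r) g -> g x %% 3 = x %% 3.
Proof.
move=> pg; case xB: (x \in Br r).
  have gB : g x \in Br r by rewrite (perm_closed _ pg).
  by move: xB gB; rewrite !inE => /eqP -> /eqP ->.
by rewrite (out_perm pg) ?xB.
Qed.

Lemma Fp_inv bb r g p : perm_on (Br r) g -> Fp bb p -> Fp bb (g * p)%g.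
Proof.
move=> pg /forallP F; apply/forallP=> x; apply/forallP=> y; rewrite !permM.
move: (F (g x)) => /forallP /(_ (g y)); rewrite !(perm_on_mod _ pg); exact.
Qed.

Lemma Br_disj r s : r != s -> [disjoint Br r & Br s].
Proof.
move=> rs; rewrite -setI_eq0; apply/eqP/setP => x; rewrite !inE.
by apply/negbTE/negP => /andP[/eqP -> /eqP e]; move: rs; rewrite e eqxx.
Qed.

Definition key bb (x : 'I_n) := lv bb (x %% 3) * (3 * n) + x.

Lemma key_inj bb : {in setT &, injective (key bb)}.
Proof.
move=> x y _ _ e; apply: val_inj => /=.
have : key bb x %% (3 * n) = key bb y %% (3 * n) by rewrite e.
rewrite /key !modnMDl !modn_small //; have := ltn_ord x; have := ltn_ord y; lia.
Qed.

Lemma val_inj_in (B : {set 'I_n}) : {in B &, injective (fun x : 'I_n => val x)}.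
Proof. by move=> x y _ _ /val_inj. Qed.

Lemma lower_count bb : #|Br 0|`! * #|Br 1|`! * #|Br 2|`! <= #|[set p | Fp bb p]|.
Proof.
have [g _ mg] := @exists_match n setT (key bb) 1%g (@key_inj bb).
rewrite mulg1 in mg.
have mk : forall x y : 'I_n, (val (g x) < val (g y)) = (key bb x < key bb y).
  by move=> x y; move: mg => /forallP /(_ x) /implyP /(_ (in_setT x)) /forallP /(_ y) /implyP /(_ (in_setT y)) /eqP.
pose P0 := Fp bb.
pose P1 := fun p => P0 p && mtch (Br 0) (fun x => val x) p.
pose P2 := fun p => P1 p && mtch (Br 1) (fun x => val x) p.
have c0 := @count_match n (Br 0) (fun x => val x) P0 (@val_inj_in _)
  (fun g p pg Pp => Fp_inv pg Pp).
have c1 := @count_match n (Br 1) (fun x => val x) P1 (@val_inj_in _)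
  (fun g p pg Pp => (introT andP (conj (Fp_inv pg (proj1 (andP Pp)))
     (etrans (mtch_disj _ _ (Br_disj (isT : 0 != 1)) pg) (proj2 (andP Pp)))))).
have c2 := @count_match n (Br 2) (fun x => val x) P2 (@val_inj_in _)
  (fun g p pg Pp => (introT andP (conj
     (introT andP (conj (Fp_inv pg (proj1 (andP (proj1 (andP Pp)))))
       (etrans (mtch_disj _ _ (Br_disj (isT : 0 != 2)) pg) (proj2 (andP (proj1 (andP Pp)))))))
     (etrans (mtch_disj _ _ (Br_disj (isT : 1 != 2)) pg) (proj2 (andP Pp)))))).
have gin : g \in [set p | P2 p && mtch (Br 2) (fun x => val x) p].
  have mr : forall r, r < 3 -> mtch (Br r) (fun x => val x) g.
    move=> r r3; apply/forallP=> x; apply/implyP; rewrite inE => /eqP xr.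
    apply/forallP=> y; apply/implyP; rewrite inE => /eqP yr.
    by rewrite mk /key xr yr ltn_add2l.
  rewrite inE /P2 /P1 /P0 (mr 0) // (mr 1) // (mr 2) // !andbT.
  apply/forallP=> x; apply/forallP=> y; apply/implyP=> xy.
  rewrite mk /key.
  have := lv_inj bb (ltn_mod x 3) (ltn_mod y 3) xy.
  have := ltn_ord x; have := ltn_ord y.
  case: (ltngtP (lv bb (x %% 3)) (lv bb (y %% 3))) => // h hy hx _.
    have : (lv bb (x %% 3)).+1 * (3 * n) <= lv bb (y %% 3) * (3 * n) by rewrite leq_mul2r h orbT.
    rewrite mulSn => hh; apply/eqP; lia.
  have : (lv bb (y %% 3)).+1 * (3 * n) <= lv bb (x %% 3) * (3 * n) by rewrite leq_mul2r h orbT.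
  rewrite mulSn => hh; apply/eqP; lia.
have c3 : 0 < #|[set p | P2 p && mtch (Br 2) (fun x => val x) p]|.
  by apply/card_gt0P; exists g.
rewrite c0 c1 c2; rewrite /P1 /P2.
set X := #|[set p | _ && mtch (Br 2) _ p]| in c3 *.
set a := #|Br 0|`!; set b := #|Br 1|`!; set c := #|Br 2|`!.
have -> : X * c * b * a = X * (a * b * c) by ring.
by rewrite leq_pmull.
Qed.

Lemma card_Br : #|Br 0| + #|Br 1| + #|Br 2| = n.
Proof.
have h1 := cardsID (Br 0) setT.
have h2 := cardsID (Br 1) (setT :\: Br 0).
have e1 : setT :&: Br 0 = Br 0 by rewrite setTI.
have e2 : (setT :\: Br 0) :&: Br 1 = Br 1.
  by apply/setP=> x; rewrite !inE; case: (x %% 3) => [|[|]].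
have e3 : (setT :\: Br 0) :\: Br 1 = Br 2.
  apply/setP=> x; rewrite !inE; have := ltn_mod x 3.
  by case: (x %% 3) => [|[|[|]]].
rewrite e1 in h1; rewrite e2 e3 in h2.
by rewrite -addnA h2 h1 cardsT card_ord.
Qed.
End Lower.

Lemma bin_le2 n m : 'C(n, m) <= 2 ^ n.
Proof.
elim: n m => [|n IH] [|m] //=; rewrite ?bin0 ?expn_gt0 //.
by rewrite binS expnS mul2n -addnn leq_add.
Qed.

Lemma fact3 a b c : (a + b + c)`! <= 4 ^ (a + b + c) * (a`! * b`! * c`!).
Proof.
have h1 := bin_fact (leq_addr (b + c) a).
rewrite addKn in h1.
have h2 := bin_fact (leq_addr c b); rewrite addKn in h2.
rewrite -addnA -h1 -h2.
have e : 4 ^ (a + (b + c)) = 2 ^ (a + (b + c)) * 2 ^ (a + (b + c)) by rewrite -expnMn.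
rewrite e.
have l1 := bin_le2 (a + (b + c)) a.
have l2 : 'C(b + c, b) <= 2 ^ (a + (b + c)).
  apply: leq_trans (bin_le2 _ _) _; rewrite leq_exp2l //; lia.
set X := 'C(a + (b + c), a) in l1 *; set Y := 'C(b + c, b) in l2 *.
set T := 2 ^ (a + (b + c)) in l1 l2 *.
have -> : X * (a`! * (Y * (b`! * c`!))) = (X * Y) * (a`! * b`! * c`!) by ring.
by rewrite leq_mul2r leq_mul ?orbT.
Qed.

Local Open Scope ring_scope.

Lemma bern (R : realFieldType) (x : R) (j : nat) : 0 <= x -> x <= 1 ->
  1 - j%:R * x <= (1 - x) ^+ j.
Proof.
move=> x0 x1; elim: j => [|j IH]; first by rewrite mul0r subr0 expr0.
rewrite exprSr; apply: le_trans (ler_wpM2r _ IH); last by rewrite subr_ge0.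
have jp : 0 <= j%:R :> R by [].
rewrite -natr1; nra.
Qed.

Unset Implicit Arguments.
Theorem mainTheorem3 (R : realType) (k : nat) (sigma : 'S_k) (eps : nat -> bool) :
  (3 <= k)%N ->
  (exists i : nat, (i.+2 < k)%N /\ eps i /\ eps i.+1) ->
  exists c d : R, [/\ 0 < c, c < 1, 0 < d, d < 1 &
    forall n : nat, (k <= n)%N ->
      c ^+ n * (n`!)%:R < (alpha n sigma eps)%:R /\
      (alpha n sigma eps)%:R < d ^+ n * (n`!)%:R].
Proof.
move=> k3 [i [hi [e0 e1]]].
set K := k`!.
have K1 : (0 < K)%N by rewrite fact_gt0.
have k0 : (0 < k)%N by apply: leq_trans k3.
have kK : (0 < 2 * k * K)%N by rewrite !muln_gt0 k0 K1.
set x : R := ((2 * k * K)%N%:R)^-1.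
have xpos : 0 < x by rewrite invr_gt0 ltr0n.
have xlt1 : x < 1.
  rewrite invf_lt1 ?ltr0n // ltr1n; apply: (@leq_trans (2 * 1 * 1)) => //.
  by rewrite leq_mul // leq_mul2l k0.
exists (5%:R^-1), (1 - x); split.
- by rewrite invr_gt0 ltr0n.
- by rewrite invf_lt1 ?ltr0n // ltr1n.
- by rewrite subr_gt0.
- by lra.
move=> n kn; have n0 : (0 < n)%N by apply: leq_trans kn.
have N0 : 0 < (n`!)%:R :> R by rewrite ltr0n fact_gt0.
split.
-
  have [bb av] : exists bb, forall p : 'S_n, Fp bb p -> ~~ gp_contains p sigma eps.
    by eexists => p; apply: (@Fp_avoid n k sigma eps _ p i hi e0 e1 (erefl _)).
  have sub : (#|[set p : 'S_n | Fp bb p]| <= alpha n sigma eps)%N.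
    by rewrite /alpha; apply: subset_leq_card; apply/subsetP => p; rewrite !inE; exact: av.
  have lc := lower_count n bb.
  have f3 := fact3 #|Br n 0| #|Br n 1| #|Br n 2|; rewrite card_Br in f3.
  have A1 : (0 < alpha n sigma eps)%N.
    apply: leq_trans sub; apply: leq_trans lc; by rewrite !muln_gt0 !fact_gt0.
  have lowN : (n`! <= 4 ^ n * alpha n sigma eps)%N.
    by apply: leq_trans f3 _; rewrite leq_mul2l (leq_trans lc sub) orbT.
  have lowR : (n`!)%:R <= 4%:R ^+ n * (alpha n sigma eps)%:R :> R.
    by rewrite -natrX -natrM ler_nat.
  have AR : 0 < (alpha n sigma eps)%:R :> R by rewrite ltr0n.
  set A := (alpha n sigma eps)%:R in lowR AR *.
  set N := (n`!)%:R in lowR N0 *.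
  have t1 : (4%:R / 5%:R) ^+ n < 1 :> R.
    rewrite exprn_ilt1 ?divr_ge0 ?ler0n // ?ltr_pdivrMr ?ltr0n ?mul1r ?ltr_nat //.
    by rewrite -lt0n.
  have t0 : 0 <= (4%:R / 5%:R) ^+ n :> R by rewrite exprn_ge0 // divr_ge0 ?ler0n.
  have c0 : 0 < (5%:R^-1) ^+ n :> R by rewrite exprn_gt0 // invr_gt0 ltr0n.
  apply: (le_lt_trans (ler_wpM2l (ltW c0) lowR)).
  rewrite mulrA -exprMn mulrC -[X in _ < X]mul1r.
  have -> : (5%:R^-1 * 4%:R) = (4%:R / 5%:R :> R) by rewrite mulrC.
  by rewrite [X in X < _]mulrC ltr_pM2r.
-
  set m := (n %/ k)%N.
  have m1 : (0 < m)%N by rewrite divn_gt0.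
  have mk : (m * k <= n)%N by apply: leq_trunc_div.
  have nlt : (n < m.+1 * k)%N by apply: ltn_ceil.
  have n2 : (n < 2 * k * m)%N.
    have : (k <= m * k)%N by rewrite leq_pmull.
    move: nlt; rewrite mulSn; lia.
  have sub : (alpha n sigma eps <= #|[set p : 'S_n | Aset sigma m p]|)%N.
    rewrite /alpha; apply: subset_leq_card; apply/subsetP => p; rewrite !inE => av.
    exact: (avoid_Aset mk av).
  have ca := @count_Aset n k sigma m mk.
  set U := #|[set p : 'S_n | Aset sigma m p]| in sub ca.
  have caR : U%:R * (K%:R) ^+ m = ((K%:R - 1) ^+ m) * (n`!)%:R :> R.
    by rewrite -natrX -natrM ca natrM natrX natrB.
  have KR : 0 < K%:R :> R by rewrite ltr0n.
  set q : R := 1 - (K%:R)^-1.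
  have qK : K%:R - 1 = q * K%:R by rewrite /q mulrBl mul1r mulVf ?gt_eqF.
  rewrite qK exprMn mulrAC in caR.
  have UR : U%:R = q ^+ m * (n`!)%:R :> R.
    apply: (mulIf (_ : K%:R ^+ m != 0)); first by rewrite expf_neq0 ?gt_eqF.
    by rewrite caR.
  have q0 : 0 <= q by rewrite /q subr_ge0 invf_le1 // ler1n.
  have qd : q <= (1 - x) ^+ (2 * k).
    apply: le_trans (bern _ (ltW xpos) (ltW xlt1)).
    rewrite /q /x (natrM _ (2 * k) K) invfM mulrA mulfV ?mul1r // pnatr_eq0 -lt0n muln_gt0 /=.
    by rewrite k0.
  have d0 : 0 < 1 - x by rewrite subr_gt0.
  have qm : q ^+ m <= (1 - x) ^+ (2 * k * m).
    rewrite exprM; apply: lerXn2r => //; rewrite nnegrE //; exact: exprn_ge0 (ltW d0).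
  have d1 : 1 - x < 1 by lra.
  have dn : (1 - x) ^+ (2 * k * m) < (1 - x) ^+ n by rewrite (ltr_iXn2l d0 d1).
  apply: (le_lt_trans (_ : _ <= U%:R)); first by rewrite ler_nat.
  by rewrite UR ltr_pM2r // (le_lt_trans qm dn).
Qed.
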